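(* There are functors $\mathbf{FinGraph}^l_\star\to\mathbf{FinLoset}$ and $\mathbf{FinGraph}^s_\star\to\mathbf{FinLoset}$ which compute the lexicographic depth-first and breadth-first traversals respectively, i.e. which send each object $G$ to the vertices of $G$ linearly ordered by the lexicographic depth-first traversal (respectively, the lexicographic breadth-first traversal) of $G$ from its distinguished vertex.
   Context: A (directed) graph is $(V,\to)$ with $\to\subseteq V\times V$; $N(u)$ is the set of outgoing edges of $u$. A pointed graph has a distinguished vertex $v_0$; connected means every vertex is reachable by a path from $v_0$. A path is a finite sequence $v_1\to\cdots\to v_n$ of vertices joined by edges, of length $|\pi|$; proper if no vertex repeats; co-initial paths share their source; $\pi\sqsubset\sigma$ means $\pi$ is a proper prefix of $\sigma$. A finite edge-ordered graph is a finite graph with a strict linear order $\triangleleft$ on each neighborhood. Lexicographic path order: if $\pi\sqsubset\sigma$ then $\pi\prec\sigma$ (symmetrically); otherwise, with $\zeta$ the longest common prefix, $u$ its target and $v_1,v_2$ the next vertices, $\pi\prec\sigma$ iff $u\to v_1\triangleleft u\to v_2$. Shortlex: $\pi\prec^s\sigma$ iff $|\pi|<|\sigma|$ or ($|\pi|=|\sigma|$ and $\pi\prec\sigma$). $\min(u\rightsquigarrow v)$ is the $\prec$-least proper path, $\min^s(u\rightsquigarrow v)$ the $\prec^s$-least path, from $u$ to $v$. A homomorphism of finite pointed edge-ordered graphs $h:G\to H$ is a vertex map with (i) $u\to v$ implies $h(u)\to h(v)$; (ii) the distinguished vertex of $G$ is the unique vertex mapped to the distinguished vertex of $H$; (iii)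 $u\to v_1\triangleleft u\to v_2$ implies $h(u)\to h(v_1)\triangleleft h(u)\to h(v_2)$. A lex-homomorphism additionally satisfies $h(\min(u\rightsquigarrow v))=\min(h(u)\rightsquigarrow h(v))$; a short-lex homomorphism additionally satisfies $h(\min^s(u\rightsquigarrow v))=\min^s(h(u)\rightsquigarrow h(v))$. $\mathbf{FinGraph}^l_\star$ (resp. $\mathbf{FinGraph}^s_\star$) is the category of connected, finite, pointed, edge-ordered graphs with lex-homomorphisms (resp. short-lex homomorphisms); $\mathbf{FinLoset}$ is the category of finite linearly ordered sets and monotone maps. Lexicographic depth-first search: with list $L=()$ and stack $S=(v_0)$, repeatedly pop $v$; if $v\notin L$, append $v$ to $L$ and push the neighbors of $v$ not in $L$ in reverse $\triangleleft$-order. Lexicographic breadth-first search: the same with a queue $Q=(v_0)$, dequeuing from the front and enqueuing the neighbors not in $L$ in $\triangleleft$-order. The respective traversal is the order in which vertices are appended to $L$. *)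

(* Defs.v *)
From mathcomp Require Import all_boot.
Set Implicit Arguments. Unset Strict Implicit. Unset Printing Implicit Defensive.

(* A finite pointed edge-ordered graph.  [E u v] is the edge u -> v;
   [eord u v1 v2] means (u -> v1) <| (u -> v2): a strict linear order on
   the outgoing edges N(u) of u. *)
Record egraph := EGraph {
  gV :> finType;
  gE : rel gV;
  groot : gV;
  eord : gV -> rel gV;
  eord_sub : forall u x y, eord u x y -> gE u x && gE u y;
  eord_irr : forall u x, ~~ eord u x x;
  eord_trans : forall u x y z, eord u x y -> eord u y z -> eord u x z;
  eord_total : forall u x y, gE u x -> gE u y -> x != y -> eord u x y || eord u y x
}.

Definition connected (G : egraph) : Prop := forall v : G, connect (@gE G) (groot G) v.

Section Paths.
Variable G : egraph.

(* A path v_1 -> ... -> v_n is represented by its source u and the list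
   s = [v_2; ...; v_n] of the remaining vertices: [path gE u s].
   Length |pi| = size s; target = last u s; proper = uniq (u :: s). *)

Fixpoint lexlt_from (u : G) (s t : seq G) : bool :=
  match s, t with
  | [::], [::] => false
  | [::], _ :: _ => true
  | _ :: _, [::] => false
  | y :: s', y' :: t' => if y == y' then lexlt_from y s' t' else eord u y y'
  end.

Definition shortlexlt (u : G) (s t : seq G) : bool :=
  (size s < size t) || ((size s == size t) && lexlt_from u s t).

Definition is_path_between (u v : G) (s : seq G) : bool :=
  path (@gE G) u s && (last u s == v).

Definition is_lexmin (u v : G) (s : seq G) : Prop :=
  [/\ is_path_between u v s, uniq (u :: s) &
      forall t, is_path_between u v t -> uniq (u :: t) -> t != s -> lexlt_from u s t].

Definition is_slmin (u v : G) (s : seq G) : Prop :=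
  is_path_between u v s /\
  forall t, is_path_between u v t -> t != s -> shortlexlt u s t.

Definition nbrs (u : G) : seq G :=
  sort (fun x y => (x == y) || eord u x y) [seq v <- enum G | gE u v].

Definition dfs_step (st : seq G * seq G) : seq G * seq G :=
  let: (L, Stk) := st in
  match Stk with
  | [::] => (L, Stk)
  | v :: Stk' =>
      if v \in L then (L, Stk')
      else let L' := rcons L v in
           (L', [seq w <- nbrs v | w \notin L'] ++ Stk')
  end.

Definition bfs_step (st : seq G * seq G) : seq G * seq G :=
  let: (L, Qu) := st in
  match Qu with
  | [::] => (L, Qu)
  | v :: Qu' =>
      if v \in L then (L, Qu')
      else let L' := rcons L v in
           (L', Qu' ++ [seq w <- nbrs v | w \notin L'])
  end.

(* Number of iterations sufficient for the stack/queue to become empty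
   (each pop either appends one of the #|G| vertices, or discards an entry;
   at most #|G| * #|G| entries are ever pushed). Once empty, the step is
   the identity, so running longer changes nothing. *)
Definition fuel : nat := (#|G|.+1 ^ 2).

Definition dfs_traversal : seq G := (iter fuel dfs_step ([::], [:: groot G])).1.
Definition bfs_traversal : seq G := (iter fuel bfs_step ([::], [:: groot G])).1.

End Paths.

Definition is_hom (G H : egraph) (h : G -> H) : Prop :=
  [/\ forall u v, gE u v -> gE (h u) (h v),
      forall x, h x = groot H <-> x = groot G &
      forall u v1 v2, eord u v1 v2 -> eord (h u) (h v1) (h v2)].

Definition is_lex_hom (G H : egraph) (h : G -> H) : Prop :=
  is_hom h /\
  forall (u v : G) (s : seq G), is_lexmin u v s -> is_lexmin (h u) (h v) (map h s).

Definition is_shortlex_hom (G H : egraph) (h : G -> H) : Prop :=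
  is_hom h /\
  forall (u v : G) (s : seq G), is_slmin u v s -> is_slmin (h u) (h v) (map h s).

Definition trav_le (G : egraph) (L : seq G) (x y : G) : bool := index x L <= index y L.

Definition is_full_enum (G : egraph) (L : seq G) : Prop := uniq L /\ forall v : G, v \in L.

(* Main.v *)
Require Import Defs.
From mathcomp Require Import all_boot.
From mathcomp Require Import zify.
Set Implicit Arguments. Unset Strict Implicit. Unset Printing Implicit Defensive.

Section Lex.
Variable G : egraph.
Implicit Types (u v w x y : G) (s t a b : seq G).

Lemma eord_neq u x y : eord u x y -> x != y.
Proof. by apply: contraTneq => ->; rewrite (negbTE (eord_irr _ _)). Qed.

Lemma lex_irr u s : lexlt_from u s s = false.
Proof. by elim: s u => //= x s IH u; rewrite eqxx. Qed.

Lemma lex_trans u a b c : lexlt_from u a b -> lexlt_from u b c -> lexlt_from u a c.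
Proof.
elim: a u b c => [|x a IH] u [|y b] [|z c] //=.
case: (eqVneq x y) => [<-|nxy].
  case: (x =P z) => [exz|nxz]; first by subst z; exact: IH.
  by [].
move=> exy; case: (y =P z) => [eyz|nyz].
  by subst z; rewrite (negbTE nxy).
move=> eyz; have exz := eord_trans exy eyz.
by rewrite (negbTE (eord_neq exz)).
Qed.

Lemma lex_asym u a b : lexlt_from u a b -> lexlt_from u b a -> False.
Proof. by move=> h1 h2; have := lex_trans h1 h2; rewrite lex_irr. Qed.

Lemma lex_catl u s a b : lexlt_from u (s ++ a) (s ++ b) = lexlt_from (last u s) a b.
Proof. by elim: s u => //= x s IH u; rewrite eqxx. Qed.

Lemma lex_prefix u a t : lexlt_from u a (a ++ t) = (t != [::]).
Proof. by elim: a u => [|x a IH] u /=; [case: t | rewrite eqxx]. Qed.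

Lemma lex_nil u s : lexlt_from u s [::] = false.
Proof. by case: s. Qed.

Lemma lex_ext u a b s t : lexlt_from u a b -> ~~ prefix a b ->
  lexlt_from u (a ++ s) (b ++ t).
Proof.
elim: a u b => [|x a IH] u [|y b] //=.
case: (x =P y) => [exy|nxy] //=; subst y => h1 h2; apply: IH => //; move: h2; rewrite /= eqxx.
Qed.

Lemma lex_total u a b : path (@gE G) u a -> path (@gE G) u b -> a != b ->
  lexlt_from u a b || lexlt_from u b a.
Proof.
elim: a u b => [|x a IH] u [|y b] //=.
move=> /andP[ex pa] /andP[ey pb].
case: (x =P y) => [exy|nxy].
  by subst y; rewrite eqseq_cons eqxx /= => nab; apply: IH.
have nyx : (y == x) = false by apply/eqP => e; apply: nxy.
by rewrite nyx => _; apply: eord_total => //; apply/eqP.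
Qed.

Lemma prefix_rcons_neq a b x : prefix a (rcons b x) -> a != rcons b x -> prefix a b.
Proof.
move=> /prefixP[t e] neq; case/lastP: t e => [|t y] e.
  by rewrite cats0 in e; rewrite e eqxx in neq.
rewrite -rcons_cat in e; case: (rcons_inj e) => -> _; exact: prefix_prefix.
Qed.


Lemma lex_prefix_le u a b : prefix a b -> (a == b) || lexlt_from u a b.
Proof.
move=> /prefixP[t ->]; rewrite lex_prefix; case: t => [|y t]; first by rewrite cats0 eqxx.
by rewrite orbT.
Qed.

Lemma lex_sib u s w1 w2 : eord (last u s) w1 w2 ->
  lexlt_from u (rcons s w1) (rcons s w2).
Proof.
by move=> e; rewrite -!cats1 lex_catl /= (negbTE (eord_neq e)).
Qed.

Lemma prefix_same_size a b : prefix a b -> size a = size b -> a = b.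
Proof.
move=> /prefixP[t ->]; rewrite size_cat; case: t => [|y t]; first by rewrite cats0.
by move=> /eqP; rewrite -{1}[size a]addn0 eqn_add2l.
Qed.

Lemma sl_irr u s : shortlexlt u s s = false.
Proof. by rewrite /shortlexlt ltnn eqxx lex_irr. Qed.

Lemma sl_trans u : transitive (@shortlexlt G u).
Proof.
move=> b a c; rewrite /shortlexlt.
case/orP=> [h1|/andP[/eqP e1 h1]]; case/orP=> [h2|/andP[/eqP e2 h2]].
- by rewrite (ltn_trans h1 h2).
- by rewrite -e2 h1.
- by rewrite -e1 in h2; rewrite h2.
- by rewrite e1 e2 eqxx (lex_trans h1 h2) orbT.
Qed.

Lemma sl_total u a b : path (@gE G) u a -> path (@gE G) u b -> a != b ->
  shortlexlt u a b || shortlexlt u b a.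
Proof.
move=> pa pb nab; rewrite /shortlexlt.
case: (ltngtP (size a) (size b)) => //= e.
exact: (lex_total pa pb nab).
Qed.

Lemma sl_ext u a b w w' : shortlexlt u a b -> shortlexlt u (rcons a w) (rcons b w').
Proof.
rewrite /shortlexlt !size_rcons ltnS eqSS.
case/orP=> [->//|/andP[/eqP e h]]; rewrite e eqxx /= orbC /=.
rewrite -!cats1 lex_ext //; apply/negP => /prefix_same_size eab; move: (eab e) => {}eab.
by rewrite eab lex_irr in h.
Qed.

Lemma sl_pre u a t : (a == a ++ t) || shortlexlt u a (a ++ t).
Proof.
case: t => [|y t]; first by rewrite cats0 eqxx.
by rewrite /shortlexlt size_cat /= addnS ltnS leq_addr orbT.
Qed.

Lemma sl_nil u s : shortlexlt u s [::] = false.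
Proof. by rewrite /shortlexlt ltn0 lex_nil andbF. Qed.

Lemma sl_sib u s w1 w2 : eord (last u s) w1 w2 ->
  shortlexlt u (rcons s w1) (rcons s w2).
Proof. by move=> e; rewrite /shortlexlt lex_sib // !size_rcons eqxx orbT. Qed.

Lemma lex_dfs u a c kq w w' : (a == c) || lexlt_from u a c ->
  lexlt_from u c (rcons kq w') -> lexlt_from u kq a ->
  lexlt_from u (rcons a w) (rcons kq w').
Proof.
move=> h1 h2 h3.
have h4 : lexlt_from u a (rcons kq w').
  by case/orP: h1 => [/eqP->//|h1]; apply: lex_trans h1 h2.
case pa: (prefix a (rcons kq w')).
  have nq : a != rcons kq w' by apply: contraTneq h4 => ->; rewrite lex_irr.
  have := prefix_rcons_neq pa nq => /(lex_prefix_le u); case/orP => [/eqP e|h5].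
    by rewrite e lex_irr in h3.
  by case: (lex_asym h3 h5).
by rewrite -cats1 -[rcons kq w']cats0 lex_ext // pa.
Qed.

End Lex.

Section Nbrs.
Variable G : egraph.

Lemma nbrs_mem (v w : G) : (w \in nbrs v) = gE v w.
Proof. by rewrite /nbrs mem_sort mem_filter mem_enum andbT. Qed.

Lemma nbrs_uniq (v : G) : uniq (nbrs v).
Proof. by rewrite /nbrs sort_uniq filter_uniq // enum_uniq. Qed.

Lemma nbrs_size (v : G) : size (nbrs v) <= #|G|.
Proof. by rewrite /nbrs size_sort cardE size_filter count_size. Qed.

Lemma pairwise_strict (T : eqType) (r : rel T) (s : seq T) :
  uniq s -> pairwise (fun x y => (x == y) || r x y) s -> pairwise r s.
Proof.
elim: s => //= x s IH /andP[xs us] /andP[al ps]; rewrite IH // andbT.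
apply/allP => y ys; move/allP: al => /(_ y ys) /orP[/eqP e|//].
by rewrite e ys in xs.
Qed.

Lemma nbrs_sorted (v : G) : pairwise (eord v) (nbrs v).
Proof.
apply: pairwise_strict; first exact: nbrs_uniq.
rewrite -sorted_pairwise; last first.
  move=> y x z /orP[/eqP->//|h1] /orP[/eqP<-|h2]; first by rewrite h1 orbT.
  by rewrite (eord_trans h1 h2) orbT.
apply: (@sort_sorted_in _ (gE v)).
  move=> x y hx hy; case: (eqVneq x y) => [->|nxy]; first by rewrite ?eqxx.
  by have := eord_total hx hy nxy; case/orP => ->; rewrite !orbT.
by apply/allP => x; rewrite mem_filter => /andP[].
Qed.

End Nbrs.

Section Gen.
Variable G : egraph.
Local Notation r := (groot G).
Variable lt : rel (seq G).
Hypothesis lt_trans : transitive lt.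
Hypothesis lt_irr : forall s, lt s s = false.
Variable valid : G -> seq G -> bool.
Variable key : G -> seq G.
Definition lec a b := (a == b) || lt a b.
Hypothesis key_valid : forall x, valid x (key x).
Hypothesis key_min : forall x s, valid x s -> lec (key x) s.
Hypothesis valid_path : forall x s, valid x s -> path (@gE G) r s && (last r s == x).
Hypothesis valid_prefix : forall x s1 s2, valid x (s1 ++ s2) -> valid (last r s1) s1.
Hypothesis valid_ext : forall q s w, valid q s -> gE q w -> w \notin r :: s ->
  valid w (rcons s w).
Hypothesis lt_pre : forall a t, lec a (a ++ t).
Hypothesis lt_ext : forall p a b y, valid p a -> valid p b -> lt a b ->
  lt (rcons a y) (rcons b y).
Hypothesis lt_nil : forall s, lt s [::] = false.
Hypothesis valid_nil : valid r [::].
Hypothesis lt_sib : forall s w1 w2, eord (last r s) w1 w2 ->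
  lt (rcons s w1) (rcons s w2).

Lemma lec_refl a : lec a a. Proof. by rewrite /lec eqxx. Qed.

Lemma lec_lt_trans b a c : lec a b -> lt b c -> lt a c.
Proof. by case/orP => [/eqP->//|h1 h2]; apply: lt_trans h1 h2. Qed.

Lemma lt_lec_trans b a c : lt a b -> lec b c -> lt a c.
Proof. by move=> h1 /orP[/eqP<-//|h2]; apply: lt_trans h1 h2. Qed.

Lemma lec_trans b a c : lec a b -> lec b c -> lec a c.
Proof.
case/orP => [/eqP->//|h1] h2; by rewrite /lec (lt_lec_trans h1 h2) orbT.
Qed.

Lemma lt_asym a b : lt a b -> lt b a -> False.
Proof. by move=> h1 h2; have := lt_trans h1 h2; rewrite lt_irr. Qed.

Lemma key_last x : last r (key x) = x.
Proof. by case/andP: (valid_path (key_valid x)) => _ /eqP. Qed.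

Lemma key_inj x y : key x = key y -> x = y.
Proof. by move=> e; rewrite -(key_last x) -(key_last y) e. Qed.

Lemma key_root : key r = [::].
Proof. by case/orP: (key_min valid_nil) => [/eqP//|]; rewrite lt_nil. Qed.

Definition entry_ok (L : seq G) (e : G * seq G) :=
  exists2 q, q \in L & gE q e.1 /\ e.2 = rcons (key q) e.1.

Record inv (L : seq G) (Z : seq (G * seq G)) : Prop := MkInv {
  i_uniq : uniq L;
  i_A : forall a b, a \in L -> b \notin L -> lt (key a) (key b);
  i_P : pairwise (fun a b => lt (key a) (key b)) L;
  i_0 : L = [::] -> Z = [:: (r, [::])];
  i_Z : pairwise (fun e f : G * seq G => lt e.2 f.2) Z;
  i_E : forall e, e \in Z -> L != [::] -> entry_ok L e;
  i_C : forall q w, q \in L -> gE q w -> w \notin L -> (w, rcons (key q) w) \in Z }.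

Lemma root_in (L : seq G) :
  (forall a b, a \in L -> b \notin L -> lt (key a) (key b)) -> L != [::] -> r \in L.
Proof.
case: L => // a L' hA _; apply/negPn/negP => hr.
by have := hA a r (mem_head _ _) hr; rewrite key_root lt_nil.
Qed.

Lemma mem_split_last (z : G) s : z \in r :: s ->
  exists s1 s2, s = s1 ++ s2 /\ last r s1 = z.
Proof.
rewrite in_cons => /orP[/eqP->|zs]; first by exists [::], s.
case/splitPr: zs => p1 p2; exists (rcons p1 z), p2.
by rewrite cat_rcons last_rcons.
Qed.

Lemma onL L Z q z : inv L Z -> q \in L -> z \in r :: key q -> z \in L.
Proof.
move=> [_ hA _ _ _ _ _] qL /mem_split_last [s1 [s2 [e lz]]].
apply/negPn/negP => zL.
have v1 : valid z s1.
  by rewrite -lz; apply: (@valid_prefix q s1 s2); rewrite -e.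
have h1 := key_min v1.
have h2 : lec s1 (key q) by rewrite e.
have := hA q z qL zL => h3.
have := lt_lec_trans h3 (lec_trans h1 h2); by rewrite lt_irr.
Qed.

Lemma split_first (P : pred G) u s : P u -> ~~ P (last u s) ->
  exists s1 y s2, [/\ s = s1 ++ y :: s2, P (last u s1) & ~~ P y].
Proof.
elim: s u => [|x s IH] u /= Pu; first by rewrite Pu.
case Px: (P x).
  move=> h; case: (IH x Px h) => s1 [y [s2 [e p1 p2]]].
  by exists (x :: s1), y, s2; rewrite e.
by move=> _; exists [::], x, s; rewrite Px.
Qed.

Lemma head_le L Z v c Z' b : inv L Z -> Z = (v, c) :: Z' -> b \notin L ->
  lec c (key b).
Proof.
move=> I eZ bL; case: (I) => [uL hA hP h0 hZ hE hC].
case: (eqVneq L [::]) => [L0|Ln].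
  by move: (h0 L0); rewrite eZ => -[_ -> _]; exact: (lt_pre [::] (key b)).
have rL := root_in hA Ln.
move: (valid_path (key_valid b)) => /andP[pb /eqP lb].
have: ~~ ((fun x => x \in L) (last r (key b))) by rewrite lb.
case/(@split_first (fun x => x \in L) r _ rL) => s1 [y [s2 [e p1 p2]]].
set p := last r s1 in p1.
have epy : gE p y by move: pb; rewrite e cat_path /= => /and3P[_ ? _].
have inZ := hC p y p1 epy p2.
have h1 : lec c (rcons (key p) y).
  move: inZ; rewrite eZ in_cons => /orP[/eqP [_ <-]|inZ']; first exact: lec_refl.
  by move: hZ; rewrite eZ /= => /andP[/allP al _]; rewrite /lec (al _ inZ') orbT.
have vp : valid p s1.
  by apply: (@valid_prefix b s1 (y :: s2)); rewrite -e key_valid.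
have hpre : lec (rcons s1 y) (key b) by rewrite e -cat_rcons; exact: lt_pre.
have h2 : lec (rcons (key p) y) (key b).
  case/orP: (key_min vp) => [/eqP ->//|hlt].
  have h := lt_ext y (key_valid p) vp hlt.
  by rewrite /lec (lt_lec_trans h hpre) orbT.
exact: lec_trans h1 h2.
Qed.

Lemma visit L Z v c Z' : inv L Z -> Z = (v, c) :: Z' -> v \notin L ->
  lec (key v) c /\ (forall b, b \notin L -> b != v -> lt (key v) (key b)).
Proof.
move=> I eZ vL; case: (I) => [uL hA hP h0 hZ hE hC].
have vc : valid v c.
  case: (eqVneq L [::]) => [L0|Ln].
    by move: (h0 L0); rewrite eZ => -[-> ->].
  have: (v, c) \in Z by rewrite eZ mem_head.
  move/hE/(_ Ln) => [q qL [/= eq ec]]; rewrite ec; apply: valid_ext => //.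
  by apply/negP => /(onL I qL); rewrite (negbTE vL).
have h1 := key_min vc; split => // b bL nbv.
have h2 := head_le I eZ bL.
case/orP: (lec_trans h1 h2) => [/eqP e|//].
by have eq := key_inj e; rewrite eq eqxx in nbv.
Qed.

Lemma inv_pop L Z v c Z' : inv L Z -> Z = (v, c) :: Z' -> v \in L -> inv L Z'.
Proof.
move=> [uL hA hP h0 hZ hE hC] eZ vL; split => //.
- by move=> L0; rewrite L0 in vL.
- by move: hZ; rewrite eZ /= => /andP[].
- by move=> e eZ'; apply: hE; rewrite eZ in_cons eZ' orbT.
- move=> q w qL eqw wL; move: (hC q w qL eqw wL); rewrite eZ in_cons.
  case/orP => [/eqP [ewv _]|//]; by rewrite ewv vL in wL.
Qed.

Definition newZ (L : seq G) (v : G) :=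
  [seq (w, rcons (key v) w) | w <- [seq w <- nbrs v | w \notin rcons L v]].

Lemma newZ_pairwise L v : pairwise (fun e f : G * seq G => lt e.2 f.2) (newZ L v).
Proof.
rewrite /newZ pairwise_map; apply: pairwise_filter.
apply: sub_pairwise (nbrs_sorted v) => w1 w2 /= h.
by apply: lt_sib; rewrite key_last.
Qed.

Lemma inv_visit L Z v c Z' Zn : inv L Z -> Z = (v, c) :: Z' -> v \notin L ->
  (forall e, (e \in Zn) = (e \in newZ L v ++ Z')) ->
  pairwise (fun e f : G * seq G => lt e.2 f.2) Zn -> inv (rcons L v) Zn.
Proof.
move=> I eZ vL mZn pZn; case: (I) => [uL hA hP h0 hZ hE hC].
have [vmin vlt] := visit I eZ vL.
split => //.
- by rewrite rcons_uniq vL.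
- move=> a b; rewrite !mem_rcons !in_cons negb_or => /orP[/eqP->|aL] /andP[nbv bL].
    by apply: vlt.
  exact: hA.
- rewrite pairwise_rcons hP andbT; apply/allP => a aL.
  by apply: hA.
- by case: (L).
- move=> e; rewrite mZn mem_cat => /orP[eN _|eZ' _].
    move: eN; rewrite /newZ => /mapP[w]; rewrite mem_filter nbrs_mem => /andP[_ evw] -> /=.
    by exists v; rewrite ?mem_rcons ?mem_head.
  case: (eqVneq L [::]) => [L0|Ln].
    by move: (h0 L0); rewrite eZ => -[_ _ e0]; rewrite e0 in eZ'.
  have eZi : e \in Z by rewrite eZ in_cons eZ' orbT.
  have [q qL hq] := hE e eZi Ln.
  by exists q => //; rewrite mem_rcons in_cons qL orbT.
- move=> q w; rewrite mem_rcons in_cons => /orP[/eqP->|qL] eqw wL; rewrite mZn mem_cat.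
    apply/orP; left; apply/mapP; exists w => //.
    by rewrite mem_filter wL nbrs_mem.
  have wL' : w \notin L by move: wL; rewrite mem_rcons in_cons negb_or => /andP[].
  move: (hC q w qL eqw wL'); rewrite eZ in_cons => /orP[/eqP [ewv _]|->]; last by rewrite orbT.
  by move: wL; rewrite ewv mem_rcons mem_head.
Qed.


Definition Inv (st : seq G * seq G) := exists Z, inv st.1 Z /\ st.2 = unzip1 Z.

Lemma unzip1_newZ L v :
  unzip1 (newZ L v) = [seq w <- nbrs v | w \notin rcons L v].
Proof. by rewrite /newZ; elim: [seq w <- nbrs v | _] => //= x s ->. Qed.

Hypothesis H_dfs : forall a c kq w w', lec a c -> lt c (rcons kq w') -> lt kq a ->
  lt (rcons a w) (rcons kq w').
Hypothesis H_bfs : forall a b w w', lt a b -> lt (rcons a w) (rcons b w').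

Lemma dfs_Inv st : Inv st -> Inv (dfs_step st).
Proof.
case: st => L S [Z [/= I ->]].
case eZ: Z => [|[v c] Z'] /=; first by exists [::]; split => //; rewrite -eZ.
case: ifP => vL.
  by exists Z'; split => //; apply: inv_pop I eZ vL.
exists (newZ L v ++ Z'); split; last by rewrite /= -unzip1_newZ /unzip1 map_cat.
rewrite /=.
apply: (inv_visit I eZ) => //; first by rewrite vL.
case: (I) => [uL hA hP h0 hZ hE hC].
have [vmin _] := visit I eZ (negbT vL).
rewrite pairwise_cat newZ_pairwise /=.
move: hZ; rewrite eZ /= => /andP[/allP hc ->]; rewrite andbT.
apply/allrelP => e f /mapP[w _ ->] fZ' /=.
case: (eqVneq L [::]) => [L0|Ln].
  by move: (h0 L0); rewrite eZ => -[_ _ e0]; rewrite e0 in fZ'.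
have fZi : f \in Z by rewrite eZ in_cons fZ' orbT.
have [q qL [_ ef]] := hE f fZi Ln.
rewrite ef; apply: H_dfs vmin _ _.
  by rewrite -ef; apply: hc.
by apply: hA => //; rewrite vL.
Qed.

Lemma bfs_Inv st : Inv st -> Inv (bfs_step st).
Proof.
case: st => L S [Z [/= I ->]].
case eZ: Z => [|[v c] Z'] /=; first by exists [::]; split => //; rewrite -eZ.
case: ifP => vL.
  by exists Z'; split => //; apply: inv_pop I eZ vL.
exists (Z' ++ newZ L v); split; last by rewrite /= -unzip1_newZ /unzip1 map_cat.
rewrite /=.
apply: (inv_visit I eZ) => //; first by rewrite vL.
  by move=> e; rewrite !mem_cat orbC.
case: (I) => [uL hA hP h0 hZ hE hC].
rewrite pairwise_cat newZ_pairwise andbT.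
move: hZ; rewrite eZ /= => /andP[_ ->]; rewrite andbT.
apply/allrelP => f e fZ' /mapP[w _ ->] /=.
case: (eqVneq L [::]) => [L0|Ln].
  by move: (h0 L0); rewrite eZ => -[_ _ e0]; rewrite e0 in fZ'.
have fZi : f \in Z by rewrite eZ in_cons fZ' orbT.
have [q qL [_ ef]] := hE f fZi Ln.
rewrite ef; apply: H_bfs.
by apply: hA => //; rewrite vL.
Qed.


Lemma final_all L : inv L [::] -> connected G -> forall x, x \in L.
Proof.
move=> I conn x; case: (I) => [uL hA hP h0 hZ hE hC].
have Ln : L != [::] by apply/eqP => /h0.
have rL := root_in hA Ln.
have cl : forall q w, q \in L -> gE q w -> w \in L.
  by move=> q w qL eqw; apply/negPn/negP => wL; have := hC q w qL eqw wL.
case/connectP: (conn x) => p pp ->.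
elim: p r rL pp => //= y p IH u uinL /andP[euy pp].
by apply: IH pp; apply: cl uinL euy.
Qed.

Lemma final_trav L : inv L [::] -> connected G ->
  is_full_enum L /\ forall x y, trav_le L x y = lec (key x) (key y).
Proof.
move=> I conn; have all := final_all I conn; case: (I) => [uL hA hP h0 hZ hE hC].
split => // x y.
have key_lt : forall a b, index a L < index b L -> lt (key a) (key b).
  move=> a b hab.
  have ha : index a L < size L by rewrite index_mem.
  have hb : index b L < size L by rewrite index_mem.
  move/(pairwiseP a): hP => hP'.
  have := hP' (index a L) (index b L) ha hb hab.
  by rewrite !nth_index.
rewrite /trav_le; apply/idP/idP.
  rewrite leq_eqVlt => /orP[/eqP e|h]; last by rewrite /lec key_lt ?orbT.
  have: nth x L (index x L) = nth x L (index y L) by rewrite e.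
  by rewrite !nth_index // => ->; apply: lec_refl.
move=> h; rewrite leqNgt; apply/negP => /key_lt h'.
by have := lec_lt_trans h h'; rewrite lt_irr.
Qed.

End Gen.

Section Iter.
Variables (T : Type) (step : T -> T) (I : T -> Prop) (mu : T -> nat) (done : T -> bool).
Hypothesis I_step : forall st, I st -> I (step st).
Hypothesis fix_done : forall st, done st -> step st = st.
Hypothesis mu_dec : forall st, I st -> ~~ done st -> mu (step st) < mu st.
Hypothesis mu0 : forall st, mu st = 0 -> done st.

Lemma iter_fix k st : done st -> iter k step st = st.
Proof. by move=> d; elim: k => //= k ->; apply: fix_done. Qed.

Lemma iter_done k st : I st -> mu st <= k -> done (iter k step st) /\ I (iter k step st).
Proof.
elim: k st => [|k IH] st Ist hmu.
  by split => //; apply: mu0; move: hmu; rewrite leqn0 => /eqP.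
case d: (done st); first by rewrite iter_fix.
rewrite iterSr; apply: IH; first exact: I_step.
by have := mu_dec Ist (negbT d); lia.
Qed.
End Iter.

Section Term.
Variable G : egraph.
Variable lt : rel (seq G).
Variable key : G -> seq G.

Definition mu (st : seq G * seq G) := size st.2 + (#|G| - size st.1) * #|G|.+1.

Lemma uniq_size_lt (L : seq G) v : uniq L -> v \notin L -> size L < #|G|.
Proof.
move=> uL vL; have u : uniq (v :: L) by rewrite /= vL.
by move/card_uniqP: u => e; have := max_card (mem (v :: L)); rewrite e.
Qed.

Lemma arith n l k s : l < n -> k <= n -> k + s + (n - l.+1) * n.+1 < s.+1 + (n - l) * n.+1.
Proof.
move=> hl hk; have -> : n - l = (n - l.+1).+1 by lia.
rewrite mulSn; lia.
Qed.

Lemma size_filter_nbrs (v : G) (P : pred G) : size [seq w <- nbrs v | P w] <= #|G|.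
Proof. by rewrite size_filter (leq_trans (count_size _ _)) ?nbrs_size. Qed.

Lemma dfs_mu st : Inv lt key st -> st.2 != [::] -> mu (dfs_step st) < mu st.
Proof.
case: st => L [|v S] //= [Z [/= I _]] _.
case: ifP => vL /=; first by rewrite /mu /=; lia.
rewrite /mu /= size_cat size_rcons; apply: arith; last exact: size_filter_nbrs.
by apply: uniq_size_lt (i_uniq I) (negbT vL).
Qed.

Lemma bfs_mu st : Inv lt key st -> st.2 != [::] -> mu (bfs_step st) < mu st.
Proof.
case: st => L [|v S] //= [Z [/= I _]] _.
case: ifP => vL /=; first by rewrite /mu /=; lia.
rewrite /mu /= size_cat size_rcons [size S + _]addnC; apply: arith; last exact: size_filter_nbrs.
by apply: uniq_size_lt (i_uniq I) (negbT vL).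
Qed.

Lemma mu_init : mu ([::], [:: groot G]) <= fuel G.
Proof. rewrite /mu /fuel /= subn0; lia. Qed.

End Term.

Fixpoint allseq (T : finType) (n : nat) : seq (seq T) :=
  if n is k.+1 then [::] :: [seq x :: s | x <- enum T, s <- allseq T k]
  else [:: [::]].

Lemma allseqP (T : finType) n (s : seq T) : size s <= n -> s \in allseq T n.
Proof.
elim: n s => [|n IH] [|x s] //=.
rewrite ltnS => hs; rewrite in_cons; apply/orP; right.
by apply: allpairs_f; rewrite ?mem_enum ?IH.
Qed.

Lemma allseq_size (T : finType) n (s : seq T) : s \in allseq T n -> size s <= n.
Proof.
elim: n s => [|n IH] s /=; first by rewrite mem_seq1 => /eqP->.
rewrite in_cons => /orP[/eqP->//|/allpairsP[[x t] [_ /= ht ->]]].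
by rewrite /= ltnS IH.
Qed.

Lemma ex_min (T : eqType) (lt' : rel T) (P : pred T) l :
  transitive lt' -> (forall a b, P a -> P b -> a != b -> lt' a b || lt' b a) ->
  has P l -> exists2 m, m \in l & P m && all (fun t => ~~ P t || (t == m) || lt' m t) l.
Proof.
move=> tr tot; elim: l => //= a l IH.
case Pa: (P a) => /= hl.
  case hl': (has P l).
    case: (IH hl') => m ml /andP[Pm alm].
    case: (eqVneq a m) => [am|nam].
      by exists m; rewrite ?in_cons ?ml ?orbT // Pm /= am eqxx alm.
    case/orP: (tot a m Pa Pm nam) => h.
      exists a; first exact: mem_head.
      rewrite Pa /= eqxx /=; apply/allP => t tl; case Pt: (P t) => //=.
      move/allP: alm => /(_ t tl); rewrite Pt /= => /orP[/eqP->|h2]; first by rewrite h orbT.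
      by rewrite (tr _ _ _ h h2) orbT.
    by exists m; rewrite ?in_cons ?ml ?orbT // Pm /= h !orbT alm.
  exists a; first exact: mem_head.
  rewrite Pa /= eqxx /=; apply/allP => t tl.
  by move/hasPn: (negbT hl') => /(_ t tl) ->.
case: (IH hl) => m ml /andP[Pm alm].
by exists m; rewrite ?in_cons ?ml ?orbT // Pm /=.
Qed.

Section Keys.
Variable G : egraph.
Variable lt : rel (seq G).
Variable valid : G -> seq G -> bool.

Definition keyP x s := [&& valid x s, size s <= #|G| &
  all (fun t => ~~ valid x t || (t == s) || lt s t) (allseq G #|G|)].
Definition keyf x := nth [::] (allseq G #|G|) (find (keyP x) (allseq G #|G|)).

Hypothesis lt_tr : transitive lt.
Hypothesis lt_tot : forall x a b, valid x a -> valid x b -> a != b -> lt a b || lt b a.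
Hypothesis ex0 : forall x, exists s, valid x s && (size s <= #|G|).
Hypothesis big : forall x s m, valid x s -> #|G| < size s -> valid x m ->
  size m <= #|G| -> lt m s.

Lemma keyf_spec x : keyP x (keyf x).
Proof.
have [s0 /andP[v0 sz0]] := ex0 x.
have hP : has (valid x) (allseq G #|G|) by apply/hasP; exists s0; rewrite ?allseqP.
case: (ex_min lt_tr (@lt_tot x) hP) => m ml /andP[vm alm].
have hk : has (keyP x) (allseq G #|G|).
  by apply/hasP; exists m => //; rewrite /keyP vm alm allseq_size.
exact: nth_find.
Qed.

Lemma keyf_valid x : valid x (keyf x).
Proof. by case/and3P: (keyf_spec x). Qed.

Lemma keyf_min x s : valid x s -> lec lt (keyf x) s.
Proof.
move=> vs; case/and3P: (keyf_spec x) => vk szk alk.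
case: (leqP (size s) #|G|) => hs.
  move/allP: alk => /(_ s (allseqP hs)); rewrite vs /= => /orP[/eqP->|h].
    by rewrite /lec eqxx.
  by rewrite /lec h orbT.
by rewrite /lec (big vs hs vk szk) orbT.
Qed.

End Keys.

Section Inst.
Variable G : egraph.
Local Notation r := (groot G).
Hypothesis conn : connected G.

Lemma ex_path x : exists s, [&& path (@gE G) r s, last r s == x & uniq (r :: s)].
Proof.
case/connectP: (conn x) => p pp ->; case: (shortenP pp) => p' pp' up' _.
by exists p'; rewrite pp' eqxx up'.
Qed.

Lemma uniq_size (s : seq G) : uniq (r :: s) -> size s < #|G|.
Proof.
by move=> u; move/card_uniqP: u => e; have := max_card (mem (r :: s)); rewrite e.
Qed.

Definition vd (x : G) (s : seq G) := [&& path (@gE G) r s, last r s == x & uniq (r :: s)].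
Definition ltd := lexlt_from r.
Definition keyd := keyf ltd vd.

Lemma ltd_trans : transitive ltd.
Proof. by move=> y x z; apply: lex_trans. Qed.

Lemma ltd_irr s : ltd s s = false. Proof. exact: lex_irr. Qed.

Lemma ltd_tot x a b : vd x a -> vd x b -> a != b -> ltd a b || ltd b a.
Proof. by case/and3P=> pa _ _ /and3P[pb _ _]; apply: lex_total. Qed.

Lemma vd_ex0 x : exists s, vd x s && (size s <= #|G|).
Proof.
have [s hs] := ex_path x; exists s; rewrite /vd hs /=.
by case/and3P: hs => _ _ /uniq_size /ltnW.
Qed.

Lemma vd_big x s m : vd x s -> #|G| < size s -> vd x m -> size m <= #|G| -> ltd m s.
Proof. by case/and3P => _ _ /uniq_size h1 h2; have := ltn_trans h1 h2; rewrite ltnn. Qed.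

Lemma keyd_valid x : vd x (keyd x).
Proof. exact: keyf_valid ltd_trans ltd_tot vd_ex0 x. Qed.

Lemma keyd_min x s : vd x s -> lec ltd (keyd x) s.
Proof. exact: keyf_min ltd_trans ltd_tot vd_ex0 vd_big x s. Qed.

Lemma vd_path x s : vd x s -> path (@gE G) r s && (last r s == x).
Proof. by case/and3P => -> ->. Qed.

Lemma vd_prefix x s1 s2 : vd x (s1 ++ s2) -> vd (last r s1) s1.
Proof.
rewrite /vd cat_path => /and3P[/andP[p1 _] _ u]; rewrite p1 eqxx /=.
by move: u; rewrite -cat_cons cat_uniq => /and3P[].
Qed.

Lemma vd_ext q s w : vd q s -> gE q w -> w \notin r :: s -> vd w (rcons s w).
Proof.
case/and3P => ps /eqP ls us eqw ws.
by rewrite /vd rcons_path ps ls eqw last_rcons eqxx -rcons_cons rcons_uniq ws us.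
Qed.

Lemma ltd_pre a t : lec ltd a (a ++ t).
Proof. exact: lex_prefix_le (prefix_prefix _ _). Qed.

Lemma last_uniq_neq (a t : seq G) : uniq (r :: a ++ t) -> t != [::] ->
  last r (a ++ t) != last r a.
Proof.
rewrite -cat_cons cat_uniq => /and3P[_ dis _]; case/lastP: t dis => // t z dis _.
rewrite last_cat last_rcons; apply/eqP => ez.
move/hasPn: dis => /(_ z); rewrite mem_rcons mem_head => /(_ isT).
by rewrite ez mem_last.
Qed.

Lemma ltd_ext p a b y : vd p a -> vd p b -> ltd a b -> ltd (rcons a y) (rcons b y).
Proof.
move=> va vb hab; rewrite /ltd -!cats1; apply: lex_ext => //.
apply/negP => /prefixP[t eb].
case: (eqVneq t [::]) => [t0|tn].
  by rewrite eb t0 cats0 /ltd lex_irr in hab.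
case/and3P: va => _ /eqP la _; case/and3P: vb => _ /eqP lb ub.
have ub' : uniq (r :: a ++ t) by rewrite -eb.
by move: (last_uniq_neq ub' tn); rewrite -eb lb la eqxx.
Qed.

Lemma ltd_nil s : ltd s [::] = false. Proof. exact: lex_nil. Qed.
Lemma vd_nil : vd r [::]. Proof. by rewrite /vd /= eqxx. Qed.
Lemma ltd_sib s w1 w2 : eord (last r s) w1 w2 -> ltd (rcons s w1) (rcons s w2).
Proof. exact: lex_sib. Qed.
Lemma ltd_dfs a c kq w w' : lec ltd a c -> ltd c (rcons kq w') -> ltd kq a ->
  ltd (rcons a w) (rcons kq w').
Proof. exact: lex_dfs. Qed.

Definition vb (x : G) (s : seq G) := path (@gE G) r s && (last r s == x).
Definition ltb := shortlexlt r.
Definition keyb := keyf ltb vb.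

Lemma ltb_trans : transitive ltb. Proof. exact: sl_trans. Qed.
Lemma ltb_irr s : ltb s s = false. Proof. exact: sl_irr. Qed.
Lemma ltb_tot x a b : vb x a -> vb x b -> a != b -> ltb a b || ltb b a.
Proof. by case/andP=> pa _ /andP[pb _]; apply: sl_total. Qed.
Lemma vb_ex0 x : exists s, vb x s && (size s <= #|G|).
Proof.
have [s hs] := ex_path x; exists s; case/and3P: hs => p l /uniq_size /ltnW h.
by rewrite /vb p l h.
Qed.
Lemma vb_big x s m : vb x s -> #|G| < size s -> vb x m -> size m <= #|G| -> ltb m s.
Proof. by move=> _ h1 _ h2; rewrite /ltb /shortlexlt (leq_ltn_trans h2 h1). Qed.
Lemma keyb_valid x : vb x (keyb x).
Proof. exact: keyf_valid ltb_trans ltb_tot vb_ex0 x. Qed.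
Lemma keyb_min x s : vb x s -> lec ltb (keyb x) s.
Proof. exact: keyf_min ltb_trans ltb_tot vb_ex0 vb_big x s. Qed.
Lemma vb_path x s : vb x s -> path (@gE G) r s && (last r s == x).
Proof. by []. Qed.
Lemma vb_prefix x s1 s2 : vb x (s1 ++ s2) -> vb (last r s1) s1.
Proof. by rewrite /vb cat_path => /andP[/andP[-> _] _]; rewrite eqxx. Qed.
Lemma vb_ext q s w : vb q s -> gE q w -> w \notin r :: s -> vb w (rcons s w).
Proof.
by case/andP => ps /eqP ls eqw _; rewrite /vb rcons_path ps ls eqw last_rcons eqxx.
Qed.
Lemma ltb_pre a t : lec ltb a (a ++ t). Proof. exact: sl_pre. Qed.
Lemma ltb_ext p a b y : vb p a -> vb p b -> ltb a b -> ltb (rcons a y) (rcons b y).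
Proof. by move=> _ _; apply: sl_ext. Qed.
Lemma ltb_nil s : ltb s [::] = false. Proof. exact: sl_nil. Qed.
Lemma vb_nil : vb r [::]. Proof. by rewrite /vb /= eqxx. Qed.
Lemma ltb_sib s w1 w2 : eord (last r s) w1 w2 -> ltb (rcons s w1) (rcons s w2).
Proof. exact: sl_sib. Qed.
Lemma ltb_bfs a b w w' : ltb a b -> ltb (rcons a w) (rcons b w').
Proof. exact: sl_ext. Qed.

Lemma init_Inv lt (key : G -> seq G) : Inv lt key ([::], [:: r]).
Proof.
exists [:: (r, [::])]; split => //; split => //.
Qed.

Lemma dfs_result : is_full_enum (dfs_traversal G) /\
  forall x y, trav_le (dfs_traversal G) x y = lec ltd (keyd x) (keyd y).
Proof.
have Istep := dfs_Inv ltd_trans ltd_irr keyd_valid keyd_min vd_path vd_prefix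
  vd_ext ltd_pre ltd_ext ltd_nil vd_nil ltd_sib ltd_dfs.
have := @iter_done _ (@dfs_step G) (Inv ltd keyd) (@mu G)
  (fun st => st.2 == [::]) Istep _ (@dfs_mu G ltd keyd) _ (fuel G) _ (init_Inv ltd keyd)
  (mu_init G).
case.
- by case=> L [|v S].
- by case=> L S; rewrite /mu /=; case: S.
move=> /eqP dn [Z [If e]]; rewrite dn in e.
have Z0 : Z = [::] by case: Z e If.
rewrite Z0 in If.
by have := final_trav ltd_trans ltd_irr keyd_min ltd_nil vd_nil If conn.
Qed.

Lemma bfs_result : is_full_enum (bfs_traversal G) /\
  forall x y, trav_le (bfs_traversal G) x y = lec ltb (keyb x) (keyb y).
Proof.
have Istep := bfs_Inv ltb_trans ltb_irr keyb_valid keyb_min vb_path vb_prefix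
  vb_ext ltb_pre ltb_ext ltb_nil vb_nil ltb_sib ltb_bfs.
have := @iter_done _ (@bfs_step G) (Inv ltb keyb) (@mu G)
  (fun st => st.2 == [::]) Istep _ (@bfs_mu G ltb keyb) _ (fuel G) _ (init_Inv ltb keyb)
  (mu_init G).
case.
- by case=> L [|v S].
- by case=> L S; rewrite /mu /=; case: S.
move=> /eqP dn [Z [If e]]; rewrite dn in e.
have Z0 : Z = [::] by case: Z e If.
rewrite Z0 in If.
by have := final_trav ltb_trans ltb_irr keyb_min ltb_nil vb_nil If conn.
Qed.

Lemma keyd_lexmin x : is_lexmin r x (keyd x).
Proof.
case/and3P: (keyd_valid x) => p l u; split => //; first by rewrite /is_path_between p l.
move=> t /andP[pt lt] ut ntk.
have := keyd_min (x := x) (s := t); rewrite /vd pt lt ut => /(_ isT).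
by rewrite /lec eq_sym (negbTE ntk).
Qed.

Lemma lexmin_eq x s : is_lexmin r x s -> s = keyd x.
Proof.
case=> /andP[ps ls] us hs; case: (eqVneq s (keyd x)) => // nsk.
case/and3P: (keyd_valid x) => p l u.
have kne : keyd x != s by rewrite eq_sym.
have h1 := hs (keyd x) (introT andP (conj p l)) u kne.
have := keyd_min (x := x) (s := s); rewrite /vd ps ls us => /(_ isT).
case/orP => [/eqP e|h2]; first by rewrite e eqxx in nsk.
by case: (lex_asym h1 h2).
Qed.

Lemma keyb_slmin x : is_slmin r x (keyb x).
Proof.
split; first exact: keyb_valid.
move=> t vt ntk; have := keyb_min vt.
by rewrite /lec eq_sym (negbTE ntk).
Qed.

Lemma slmin_eq x s : is_slmin r x s -> s = keyb x.
Proof.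
case=> vs hs; case: (eqVneq s (keyb x)) => // nsk.
have kne : keyb x != s by rewrite eq_sym.
have h1 := hs (keyb x) (keyb_valid x) kne.
case/orP: (keyb_min vs) => [/eqP e|h2]; first by rewrite e eqxx in nsk.
by have := sl_trans h1 h2; rewrite sl_irr.
Qed.

Lemma keyd_inj x y : keyd x = keyd y -> x = y.
Proof.
move=> e; case/and3P: (keyd_valid x) => _ /eqP <- _.
by case/and3P: (keyd_valid y) => _ /eqP <- _; rewrite e.
Qed.

Lemma keyb_inj x y : keyb x = keyb y -> x = y.
Proof.
move=> e; case/andP: (keyb_valid x) => _ /eqP <-.
by case/andP: (keyb_valid y) => _ /eqP <-; rewrite e.
Qed.

End Inst.

Section Hom.
Variables (G H : egraph) (h : G -> H).
Hypothesis hh : is_hom h.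

Lemma hom_root : h (groot G) = groot H.
Proof. by case: hh => _ hr _; apply/hr. Qed.

Lemma lex_map u a b : lexlt_from u a b -> lexlt_from (h u) (map h a) (map h b).
Proof.
case: hh => _ _ ho; elim: a u b => [|x a IH] u [|y b] //=.
case: (x =P y) => [exy|nxy].
  by subst y; rewrite !eqxx; apply: IH.
move=> e; have e' := ho _ _ _ e; by rewrite (negbTE (eord_neq e')).
Qed.

Lemma sl_map u a b : shortlexlt u a b -> shortlexlt (h u) (map h a) (map h b).
Proof.
rewrite /shortlexlt !size_map; case/orP => [->//|/andP[-> hl]].
by rewrite lex_map ?orbT.
Qed.
End Hom.

Theorem corollary9p4 :
  (forall G : egraph, connected G ->
     is_full_enum (dfs_traversal G) /\ is_full_enum (bfs_traversal G)) /\
  (forall (G H : egraph) (h : G -> H), connected G -> connected H ->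
     is_lex_hom h ->
     forall x y : G, trav_le (dfs_traversal G) x y ->
                     trav_le (dfs_traversal H) (h x) (h y)) /\
  (forall (G H : egraph) (h : G -> H), connected G -> connected H ->
     is_shortlex_hom h ->
     forall x y : G, trav_le (bfs_traversal G) x y ->
                     trav_le (bfs_traversal H) (h x) (h y)).
Proof.
split; first by move=> G c; split; [case: (dfs_result c) | case: (bfs_result c)].
split.
  move=> G H h cG cH [hh hm] x y.
  have [_ tG] := dfs_result cG; have [_ tH] := dfs_result cH.
  rewrite tG tH => /orP[/eqP e|lt].
    by rewrite (keyd_inj cG e) /lec eqxx.
  have hx := hm _ _ _ (keyd_lexmin cG x); have hy := hm _ _ _ (keyd_lexmin cG y).
  rewrite hom_root // in hx hy.
  have ex := lexmin_eq cH hx; have ey := lexmin_eq cH hy.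
  rewrite /lec -ex -ey; apply/orP; right.
  by have := lex_map hh lt; rewrite hom_root.
move=> G H h cG cH [hh hm] x y.
have [_ tG] := bfs_result cG; have [_ tH] := bfs_result cH.
rewrite tG tH => /orP[/eqP e|lt].
  by rewrite (keyb_inj cG e) /lec eqxx.
have hx := hm _ _ _ (keyb_slmin cG x); have hy := hm _ _ _ (keyb_slmin cG y).
rewrite hom_root // in hx hy.
have ex := slmin_eq cH hx; have ey := slmin_eq cH hy.
rewrite /lec -ex -ey; apply/orP; right.
by have := sl_map hh lt; rewrite hom_root.
Qed.
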